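(* For every word $w$ of positive integers and every $k\ge1$, $P(w)|_{[k]}=P(w|_{[k]})$.
   Context: $[k]=\{1,\dots,k\}$. For a tableau $T$ and set $I$, $T|_I$ is obtained by deleting all boxes whose labels are not in $I$; $w|_I$ is obtained from the word $w$ by deleting all letters not in $I$. Shifted shapes: for a strict partition $\lambda$, boxes $(i,j)$ with $i\le j\le i+\lambda_i-1$; boxes $(i,i)$ form the main diagonal. Increasing shifted tableau: entries strictly increase along rows and down columns. Shifted Hecke insertion of $x$ into an increasing shifted tableau $T$: first insert $x$ into row 1. When $x$ is inserted into a row (resp. column): (i) if $x$ is weakly larger than all entries and adjoining a box containing $x$ at the end of that row (resp. column) gives an increasing shifted tableau, do so and stop (adjoining to an empty row $i$ means adding box $(i,i)$); (ii) if $x$ is weakly larger than all entries but adjoining fails to give an increasing shifted tableau, leave the tableau unchanged and stop; (iii) otherwise let $y$ be the smallest entry strictly larger than $x$ there; replace $y$ by $x$ if the result is increasing, otherwise change nothing; in either case $y$ is output: if $x$ was inserted into a column or $y$ lies on the main diagonal, $y$ is inserted into the next column to the right (all subsequent outputs go into successive columns), otherwise into the next row below. $P(w)=(\cdots(\emptyset\leftarrow w_1)\cdots)\leftarrow w_n$. *)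

(* Defs.v *)
From mathcomp Require Import all_boot.
Set Implicit Arguments. Unset Strict Implicit. Unset Printing Implicit Defensive.

(* A shifted tableau is stored as its list of rows; row i (0-indexed) occupies
   the columns i, i+1, ..., i + size (row i) - 1 (so the first box of each
   row lies on the main diagonal). Rows and columns are 0-indexed. *)
Definition tableau := seq (seq nat).

Definition row (T : tableau) (i : nat) : seq nat := nth [::] T i.

Definition get (T : tableau) (i j : nat) : option nat :=
  if i <= j then
    let r := row T i in
    if j - i < size r then Some (nth 0 r (j - i)) else None
  else None.

Definition shifted_shape (T : tableau) : bool :=
  all (fun r => 0 < size r) T && sorted (fun a b => b < a) (map size T).

Definition opt_gt (o : option nat) (x : nat) : bool :=
  if o is Some y then x < y else true.

Definition increasing (T : tableau) : bool :=
  all (fun i => all (fun j =>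
         match get T i j with
         | Some x => opt_gt (get T i j.+1) x && opt_gt (get T i.+1 j) x
         | None => true
         end) (iota i (size (row T i)))) (iota 0 (size T)).

Definition valid (T : tableau) : bool := shifted_shape T && increasing T.

Definition set_box (T : tableau) (i j x : nat) : tableau :=
  if i < size T then
    let r := row T i in
    if (i <= j) && (j - i <= size r) then set_nth [::] T i (set_nth 0 r (j - i) x)
    else T
  else if (i == size T) && (j == i) then rcons T [:: x] else T.

Inductive target := InRow of nat | InCol of nat.

(* One run of shifted Hecke insertion, with fuel (always sufficient). *)
Fixpoint hstep (fuel : nat) (T : tableau) (t : target) (x : nat) : tableau :=
  match fuel with
  | 0 => T
  | f.+1 =>
    match t with
    | InRow i =>
      let r := row T i in
      if all (fun y => y <= x) r then
        let T' := set_box T i (i + size r) x in if valid T' then T' else T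
      else
        let k := find (fun y => x < y) r in
        let y := nth 0 r k in
        let j := i + k in
        let T' := set_box T i j x in
        let T1 := if valid T' then T' else T in
        hstep f T1 (if j == i then InCol i.+1 else InRow i.+1) y
    | InCol j =>
      let c := pmap (fun i => omap (fun v => (i, v)) (get T i j)) (iota 0 (size T)) in
      if all (fun p => p.2 <= x) c then
        let m := if c is [::] then 0 else (last (0, 0) c).1.+1 in
        let T' := set_box T m j x in if valid T' then T' else T
      else
        let p := nth (0, 0) c (find (fun p => x < p.2) c) in
        let T' := set_box T p.1 j x in
        let T1 := if valid T' then T' else T in
        hstep f T1 (InCol j.+1) p.2
    end
  end.

Definition hecke_insert (T : tableau) (x : nat) : tableau :=
  hstep (2 * sumn (map size T) + 5) T (InRow 0) x.

Definition P (w : seq nat) : tableau := foldl hecke_insert [::] w.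

Definition restrict_word (w : seq nat) (k : nat) : seq nat := [seq a <- w | a <= k].

Definition restrict_get (T : tableau) (k i j : nat) : option nat :=
  match get T i j with
  | Some x => if (1 <= x <= k) then Some x else None
  | None => None
  end.

(* Main.v *)
Require Import Defs.
From mathcomp Require Import all_boot zify.
Set Implicit Arguments. Unset Strict Implicit. Unset Printing Implicit Defensive.


Lemma get_row (T : tableau) i p :
  get T i (i + p) = if p < size (row T i) then Some (nth 0 (row T i) p) else None.
Proof. by rewrite /get leq_addr addKn. Qed.

Lemma get_someP (T : tableau) a b v : get T a b = Some v ->
  [/\ a <= b, b - a < size (row T a) & nth 0 (row T a) (b - a) = v].
Proof.
rewrite /get; case: ifP => // ab; case: ifP => // lt [<-]; by [].
Qed.

Lemma get_neq (T : tableau) a b : get T a b <> None -> a <= b /\ b - a < size (row T a).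
Proof.
rewrite /get; case: ifP => // ab; case: ifP => // lt _; by [].
Qed.

Lemma get_big (T : tableau) a b : size T <= a -> get T a b = None.
Proof.
move=> h; rewrite /get /row nth_default //; by case: ifP.
Qed.

Lemma get_rowP (T : tableau) a b b' : get T a b <> None -> a <= b' <= b -> get T a b' <> None.
Proof.
move=> /get_neq [ab lt] /andP [h1 h2]; rewrite /get h1.
have -> : b' - a < size (row T a) by lia.
by [].
Qed.

Definition applies (T : tableau) i j :=
  ((i < size T) && (i <= j) && (j - i <= size (row T i))) || ((i == size T) && (j == i)).

Lemma set_box_noop T i j x : ~~ applies T i j -> set_box T i j x = T.
Proof.
rewrite /applies /set_box negb_or => /andP [h1 h2].
case: ifP => hi.
  by move: h1; rewrite hi /= => /negbTE ->.
by move: h2 => /negbTE ->.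
Qed.

Lemma applies_le T i j : applies T i j -> i <= j.
Proof. by rewrite /applies => /orP [/andP [/andP [_ ->]]| /andP [_ /eqP ->]]. Qed.

Lemma get_set_box T i j x a b : applies T i j ->
  get (set_box T i j x) a b = if (a == i) && (b == j) then Some x else get T a b.
Proof.
rewrite /applies /set_box => /orP [/andP [/andP [hi hij] hs]| /andP [/eqP hi /eqP hj]].
  rewrite hi hij hs /=.
  rewrite /get /row nth_set_nth /=.
  case: (eqVneq a i) => [->|ne] /=; last by [].
  rewrite size_set_nth nth_set_nth /=.
  case: (eqVneq b j) => [->|nb] /=.
    rewrite hij ?eqxx; have -> : j - i < maxn (j - i).+1 (size (nth [::] T i)) by lia. by [].
  case: ifP => // ib.
  have -> : (b - i == j - i) = false by apply/negbTE; apply/eqP; lia.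
  move: hs; rewrite /row => hs.
  case: (ltnP (b - i) (size (nth [::] T i))) => h.
    by have -> : b - i < maxn (j - i).+1 (size (nth [::] T i)) by lia.
  by have -> : b - i < maxn (j - i).+1 (size (nth [::] T i)) = false by lia.
have hlt : (size T < size T) = false by rewrite ltnn.
rewrite hi hlt hj !eqxx /=; subst; rewrite eqxx.

rewrite /get /row nth_rcons.
case: (ltngtP a (size T)) => ha //=.
- by rewrite (nth_default [::]) ?(ltnW ha) //=; case: ifP.
- subst a; rewrite (nth_default [::]) //.
  case: (eqVneq b (size T)) => [->|nb] /=; first by rewrite leqnn subnn.
  case: ifP => // h.
  have -> : b - size T < 1 = false by lia. by [].
Qed.

Definition NE (T : tableau) := forall a, a < size T -> 0 < size (row T a).
Definition ColP (g : nat -> nat -> option nat) :=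
  forall a b, g a.+1 b <> None -> g a b <> None.
Definition IncP (g : nat -> nat -> option nat) :=
  forall a b v, g a b = Some v -> opt_gt (g a b.+1) v /\ opt_gt (g a.+1 b) v.

Lemma incr_iff T : increasing T <->
  (forall i j, match get T i j with
         | Some x => opt_gt (get T i j.+1) x && opt_gt (get T i.+1 j) x
         | None => true end).
Proof.
split.
  move=> /allP H i j.
  case E: (get T i j) => [x|] //.
  have [ij lt] : i <= j /\ j - i < size (row T i) by apply: get_neq; rewrite E.
  have iT : i < size T.
    case: (ltnP i (size T)) => // h; by rewrite get_big in E.
  have iI : i \in iota 0 (size T) by rewrite mem_iota.
  have /allP H2 := H i iI.
  have jI : j \in iota i (size (row T i)) by rewrite mem_iota; lia.
  by have := H2 j jI; rewrite E.
move=> H; apply/allP => i _; apply/allP => j _; exact: H.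
Qed.

Lemma validP T : valid T <-> [/\ NE T, ColP (get T) & IncP (get T)].
Proof.
rewrite /valid /shifted_shape.
have NEP : reflect (NE T) (all (fun r => 0 < size r) T).
  apply: (iffP (all_nthP [::])) => H a /H //.
split.
- move=> /andP [/andP [/NEP ne so] inc]; split => //.
  + move=> a b h.
    have [ab lt] := get_neq h.
    have aT : a.+1 < size T.
      case: (ltnP a.+1 (size T)) => // hh; by rewrite get_big in h.
    move/(sortedP 0): so => /(_ a); rewrite size_map => /(_ aT).
    rewrite !(nth_map [::]) //; last lia.
    rewrite /get; have -> : a <= b by lia.
    rewrite /row in lt * => hh; have -> : b - a < size (nth [::] T a) by lia.
    by [].
  + move: inc => /incr_iff H a b v E; have := H a b; rewrite E => /andP [h1 h2] //.
- move=> [ne co ic]; apply/andP; split; first (apply/andP; split).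
  + exact/NEP.
  + apply/(sortedP 0) => a; rewrite size_map => aT.
    rewrite !(nth_map [::]) //; last lia.
    have := ne _ aT; rewrite /row => pos.
    have := co a (a + size (nth [::] T a.+1)).
    rewrite /get.
    have -> : a.+1 <= a + size (nth [::] T a.+1) by lia.
    have -> : a + size (nth [::] T a.+1) - a.+1 < size (nth [::] T a.+1) by lia.
    move=> /(_ ltac:(by [])).
    have -> : a <= a + size (nth [::] T a.+1) by lia.
    rewrite /row; case: ifP => // h _; lia.
  + apply/incr_iff => i j; case E: (get T i j) => [x|] //.
    by have [-> ->] := ic _ _ _ E.
Qed.

Definition rg (k : nat) (g : nat -> nat -> option nat) a b :=
  match g a b with Some v => if v <= k then Some v else None | None => None end.
Definition upd (g : nat -> nat -> option nat) i j x a b :=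
  if (a == i) && (b == j) then Some x else g a b.
Definition RowP (g : nat -> nat -> option nat) :=
  forall a b b', g a b <> None -> a <= b' <= b -> g a b' <> None.

Lemma ColP_ext g1 g2 : (forall a b, g1 a b = g2 a b) -> ColP g1 -> ColP g2.
Proof. move=> e h a b; rewrite -!e; exact: h. Qed.
Lemma IncP_ext g1 g2 : (forall a b, g1 a b = g2 a b) -> IncP g1 -> IncP g2.
Proof. move=> e h a b v; rewrite -!e; exact: h. Qed.
Lemma RowP_ext g1 g2 : (forall a b, g1 a b = g2 a b) -> RowP g1 -> RowP g2.
Proof. move=> e h a b b'; rewrite -!e; exact: h. Qed.

Lemma RowP_get T : RowP (get T).
Proof. move=> a b b'; exact: get_rowP. Qed.

Lemma rg_ColInc k g : ColP g -> IncP g -> ColP (rg k g) /\ IncP (rg k g).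
Proof.
move=> co ic; split.
  move=> a b; rewrite /rg.
  case E: (g a.+1 b) => [v|] //; case: ifP => // vk _.
  case E2: (g a b) => [u|]; last by have := co a b; rewrite E E2; apply.
  have [_ ] := ic _ _ _ E2; rewrite E /= => uv.
  by have -> : u <= k by lia.
move=> a b v; rewrite /rg.
case E: (g a b) => [u|] //; case: ifP => // uk [<-].
have [h1 h2] := ic _ _ _ E.
split.
  case E1: (g a b.+1) h1 => [w|] //= h; by case: ifP.
case E1: (g a.+1 b) h2 => [w|] //= h; by case: ifP.
Qed.

Lemma rg_upd k g i j x a b : x <= k -> rg k (upd g i j x) a b = upd (rg k g) i j x a b.
Proof. move=> xk; rewrite /rg /upd; case: ifP => //; by rewrite xk. Qed.

Lemma converse k g i j x :
  (forall a b, g a b <> None -> a <= b) -> RowP g -> ColP g -> IncP g ->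
  i <= j -> opt_gt (g i j) x -> x <= k ->
  RowP (rg k (upd g i j x)) -> ColP (rg k (upd g i j x)) -> IncP (rg k (upd g i j x)) ->
  ColP (upd g i j x) /\ IncP (upd g i j x).
Proof.
move=> Dg Rg Cg Ig ij gx xk Rr Cr Ir.
have rx : rg k (upd g i j x) i j = Some x by rewrite /rg /upd !eqxx /= xk.
have left : forall b v, b.+1 = j -> g i b = Some v -> v < x.
  move=> b v bj gv.
  have ib : i <= b by apply: Dg; rewrite gv.
  have : rg k (upd g i j x) i b <> None by apply: (Rr i j); rewrite ?rx //; lia.
  have bj' : (b == j) = false by lia.
  rewrite /rg /upd bj' andbF gv; case: ifP => // vk _.
  have [h _] := Ir i b v ltac:(by rewrite /rg /upd bj' andbF gv vk).
  move: h; rewrite bj rx //.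
have above : forall a v, a.+1 = i -> g a j = Some v -> v < x.
  move=> a v ai gv.
  have : rg k (upd g i j x) a j <> None by apply: Cr; rewrite ai rx.
  have ai' : (a == i) = false by lia.
  rewrite /rg /upd ai' /= gv; case: ifP => // vk _.
  have [_ h] := Ir a j v ltac:(by rewrite /rg /upd ai' /= gv vk).
  move: h; rewrite ai rx //.
split.
  move=> a b; rewrite /upd.
  case: (eqVneq a i) => [ea|na] /=.
    case: (eqVneq b j) => //= nb; rewrite andbF; exact: Cg.
  case: (eqVneq a.+1 i) => [ea1|na1] /=; last exact: Cg.
  case: (eqVneq b j) => [eb|nb] /=; last exact: Cg.
  move=> _; subst b.
  have : rg k (upd g i j x) a j <> None by apply: Cr; rewrite ea1 rx.
  rewrite /rg /upd (negbTE na) /=.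
  by case: (g a j).
move=> a b v; rewrite /upd.
case: (eqVneq a i) => [ea|na]; case: (eqVneq b j) => [eb|nb] //=.
- subst => -[<-].
  have -> : (j.+1 == j) = false by lia.
  have -> : (i.+1 == i) = false by lia.
  rewrite /=; split.
    case E: (g i j) gx => [y|] /= gx.
      have [h _] := Ig _ _ _ E. case E2: (g i j.+1) h => [w|] //=; lia.
    case E2: (g i j.+1) => [w|] //=.
    exfalso; apply: (Rg i j.+1 j); [by rewrite E2|lia|by rewrite E].
  case E2: (g i.+1 j) => [w|] //=.
  case E: (g i j) gx => [y|] /= gx.
    have [_ h] := Ig _ _ _ E; rewrite E2 /= in h; lia.
  exfalso; apply: (Cg i j); by rewrite ?E2 ?E.
- subst a => gv.
  have [h1 h2] := Ig _ _ _ gv.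
  have -> : (i.+1 == i) = false by lia.
  split => //=.
  case: (eqVneq b.+1 j) => [eb1|nb1] //=.
  exact: (left b v eb1 gv).
- subst b => gv.
  have [h1 h2] := Ig _ _ _ gv.
  rewrite andbT; split => //=.
  case: (eqVneq a.+1 i) => [ea1|na1] //=.
  exact: (above a v ea1 gv).
- move=> gv.
  have [h1 h2] := Ig _ _ _ gv.
  split.
    case: (eqVneq b.+1 j) => [eb1|nb1]; rewrite ?andbF ?andbT //=.
    case: (eqVneq a i) na => //= _ _.
  case: (eqVneq a.+1 i) => [ea1|na1] /=; last by [].
  by [].
Qed.

Lemma NE_get T : NE T <-> forall a, a < size T -> get T a a <> None.
Proof.
split => H a aT.
  by have := H a aT; have := get_row T a 0; rewrite addn0 => -> ->.
by have := H a aT; have := get_row T a 0; rewrite addn0 => ->; case: ifP.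
Qed.

Lemma size_set_box T i j x :
  size (set_box T i j x) = if (i == size T) && (j == i) then (size T).+1 else size T.
Proof.
rewrite /set_box; case: ifP => hi.
  have -> : (i == size T) = false by lia.
  case: ifP => //= _; rewrite size_set_nth; lia.
case: ifP => //; by rewrite size_rcons.
Qed.

Lemma NE_set_box T i j x : NE T -> applies T i j -> NE (set_box T i j x).
Proof.
move=> /NE_get ne ap; apply/NE_get => a; rewrite size_set_box get_set_box //.
case: (eqVneq a i) => [ea|na]; case: (eqVneq a j) => [eb|nb] //=; subst.
- case: ifP => h aT; apply: ne; lia.
- case: ifP => h aT; apply: ne; lia.
- case: ifP => [/andP [/eqP h1 /eqP h2]|h] aT; first by subst; apply: ne; lia.
  apply: ne; lia.
Qed.

Lemma applies_char T i j : NE T ->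
  (applies T i j <-> i <= j /\
    (get T i j <> None \/ (i < j /\ get T i j.-1 <> None) \/
     (j = i /\ (i = 0 \/ get T i.-1 i.-1 <> None)))).
Proof.
move=> ne; split.
- move=> ap; split; first exact: (applies_le ap).
  move: ap; rewrite /applies => /orP [/andP [/andP [hi hij] hs]| /andP [/eqP hi /eqP hj]].
    case: (ltnP (j - i) (size (row T i))) => h.
      left; rewrite /get hij h //.
    right; left; split.
      have := ne i hi; lia.
    rewrite /get; have -> : i <= j.-1 by have := ne i hi; lia.
    have -> : j.-1 - i < size (row T i) by have := ne i hi; lia.
    by [].
  right; right; split => //.
  case: i hi {hj} => [|i] hi; [by left|right].
  have := (proj1 (NE_get T) ne i); rewrite -hi => /(_ (ltnSn _)) //.
- move=> [ij [h|[[h1 h2]|[h1 [h2|h2]]]]].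
  + have [_ lt] := get_neq h.
    have iT : i < size T by case: (ltnP i (size T)) => // hh; rewrite get_big in h.
    by rewrite /applies iT ij /=; have -> : j - i <= size (row T i) by lia.
  + have [_ lt] := get_neq h2.
    have iT : i < size T by case: (ltnP i (size T)) => // hh; rewrite get_big in h2.
    by rewrite /applies iT ij /=; have -> : j - i <= size (row T i) by lia.
  + subst; rewrite /applies /= subnn leq0n eqxx andbT.
    by case: (size T).
  + subst j.
    have iT : i.-1 < size T by case: (ltnP i.-1 (size T)) => // hh; rewrite get_big in h2.
    rewrite /applies ij subnn leq0n eqxx !andbT.
    case: (ltngtP i (size T)) => //; lia.
Qed.

Lemma step_transfer k T TR i j x :
  valid T -> valid TR -> (forall a b, get TR a b = rg k (get T) a b) -> x <= k ->
  opt_gt (get T i j) x ->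
  forall a b,
  get (if valid (set_box TR i j x) then set_box TR i j x else TR) a b =
  rg k (get (if valid (set_box T i j x) then set_box T i j x else T)) a b.
Proof.
move=> vT vTR rel xk gx.
have [neT coT icT] := (proj1 (validP T) vT).
have [neR coR icR] := (proj1 (validP TR) vTR).
have RtoT : forall a b, get TR a b <> None -> get T a b <> None.
  move=> a b; rewrite rel /rg; by case: (get T a b).
case apT: (applies T i j); case apR: (applies TR i j).
-
  have eT : forall a b, get (set_box T i j x) a b = upd (get T) i j x a b.
    by move=> a b; rewrite get_set_box ?apT.
  have eR : forall a b, get (set_box TR i j x) a b = rg k (upd (get T) i j x) a b.
    by move=> a b; rewrite get_set_box ?apR // rg_upd // /upd rel.
  have ij : i <= j by apply: (applies_le (T:=T)); rewrite apT.
  have equiv : valid (set_box T i j x) = valid (set_box TR i j x).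
    apply/idP/idP.
    + move/validP => [_ co ic]; apply/validP; split.
      * apply: NE_set_box => //; by rewrite apR.
      * have [co' _] := rg_ColInc k (ColP_ext (fun a b => eT a b) co) (IncP_ext (fun a b => eT a b) ic).
        exact: (ColP_ext (fun a b => esym (eR a b)) co').
      * have [_ ic'] := rg_ColInc k (ColP_ext (fun a b => eT a b) co) (IncP_ext (fun a b => eT a b) ic).
        exact: (IncP_ext (fun a b => esym (eR a b)) ic').
    + move/validP => [_ co ic]; apply/validP.
      have [co' ic'] : ColP (upd (get T) i j x) /\ IncP (upd (get T) i j x).
        apply: (converse (k := k)) => //.
        * move=> a b /get_neq []; by [].
        * exact: RowP_get.
        * exact: (RowP_ext eR (@RowP_get _)).
        * exact: (ColP_ext eR co).
        * exact: (IncP_ext eR ic).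
      split.
      * apply: NE_set_box => //; by rewrite apT.
      * exact: (ColP_ext (fun a b => esym (eT a b)) co').
      * exact: (IncP_ext (fun a b => esym (eT a b)) ic').
  rewrite -equiv.
  case: ifP => _ a b; last exact: rel.
  by rewrite eR /rg eT.
-
  rewrite (set_box_noop x (negbT apR)) if_same.
  case vT': (valid (set_box T i j x)); last exact: rel.
  exfalso; move: apR => /negP; apply; apply/(applies_char i j neR).
  have ij : i <= j by apply: (applies_le (T:=T)); rewrite apT.
  have [_ coT' icT'] := proj1 (validP _) vT'.
  have gx' : get (set_box T i j x) i j = Some x by rewrite get_set_box ?apT // !eqxx.
  split => //.
  case: (ltngtP i j) ij => // lij _.
  + right; left; split => //.
    have : get (set_box T i j x) i j.-1 <> None by apply: (get_rowP (b := j)); rewrite ?gx' //; lia.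
    case E: (get (set_box T i j x) i j.-1) => [v|] // _.
    have := icT' _ _ _ E; rewrite prednK ?gx' /=; last lia.
    move=> [vx _].
    move: E; rewrite get_set_box ?apT //; have -> : (j.-1 == j) = false by lia.
    rewrite andbF rel /rg => ->. by have -> : v <= k by lia.
  + subst j. right; right; split => //.
    case: i gx' apT {gx vT'} coT' icT' => [|i] gx' apT coT' icT'; [by left|right] => /=.
    have : get (set_box T i.+1 i.+1 x) i i.+1 <> None by apply: coT'; rewrite gx'.
    case E: (get (set_box T i.+1 i.+1 x) i i.+1) => [u|] // _.
    have := icT' _ _ _ E; rewrite gx' /= => [[_ ux]].
    have : get (set_box T i.+1 i.+1 x) i i <> None by apply: (get_rowP (b := i.+1)); rewrite ?E //; lia.
    case E2: (get (set_box T i.+1 i.+1 x) i i) => [w|] // _.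
    have := icT' _ _ _ E2; rewrite E /= => [[wu _]].
    move: E2; rewrite get_set_box ?apT //; have -> : (i == i.+1) = false by lia.
    rewrite /= rel /rg => ->. by have -> : w <= k by lia.
-
  exfalso; move: apT => /negP; apply; apply/(applies_char i j neT).
  move: apR => /(applies_char i j neR) [ij [h|[[h1 h2]|[h1 [h2|h2]]]]]; split => //.
  + by left; apply: RtoT.
  + by right; left; split => //; apply: RtoT.
  + by right; right; split => //; left.
  + by right; right; split => //; right; apply: RtoT.
- rewrite (set_box_noop x (negbT apR)) (set_box_noop x (negbT apT)) !if_same.
  exact: rel.
Qed.

Section G.
Variables (A : eqType) (key : A -> nat) (k x : nat) (s : seq A).
Hypothesis xk : x <= k.
Let n := find (fun a => k < key a) s.
Let sR := take n s.

Lemma G1 : all (fun a => key a <= x) s -> sR = s.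
Proof.
move=> /allP H; rewrite /sR /n.
have -> : find (fun a => k < key a) s = size s.
  apply/eqP; rewrite eqn_leq find_size /= leqNgt -has_find; apply/hasP => -[a /H]; lia.
exact: take_size.
Qed.

Lemma G2 d : ~~ all (fun a => key a <= x) s -> all (fun a => key a <= x) sR ->
  find (fun a => x < key a) s = size sR /\ k < key (nth d s (size sR)).
Proof.
move=> na aR.
have ns : n < size s.
  case: (ltnP n (size s)) => // h; move: na; rewrite -(cat_take_drop n s) all_cat aR /=.
  by rewrite drop_oversize.
have hs : has (fun a => k < key a) s by rewrite (has_find (fun a => k < key a) s).
have szR : size sR = n by rewrite /sR size_take ns.
rewrite szR; split; last exact: (nth_find d hs).
rewrite -(cat_take_drop n s) find_cat -/sR.
have -> : has (fun a => x < key a) sR = false.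
  apply/negbTE/hasPn => a /(allP aR); lia.
rewrite szR (drop_nth d ns) /=.
have := nth_find d hs; rewrite -/n => h.
have -> : x < key (nth d s n) by lia.
by rewrite addn0.
Qed.

Lemma G3 d : ~~ all (fun a => key a <= x) sR ->
  [/\ find (fun a => x < key a) sR = find (fun a => x < key a) s,
      nth d sR (find (fun a => x < key a) sR) = nth d s (find (fun a => x < key a) s) &
      ~~ all (fun a => key a <= x) s].
Proof.
move=> na.
have hR : has (fun a => x < key a) sR.
  by apply/hasP; move/allPn: na => [a ain h]; exists a => //; lia.
have e : find (fun a => x < key a) sR = find (fun a => x < key a) s.
  by rewrite -(cat_take_drop n s) find_cat -/sR hR.
split => //.
  rewrite -e /sR nth_take //.
  move: hR; rewrite has_find /sR size_take; case: ifP => //; lia.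
apply: contra na => /allP H; apply/allP => a /mem_take; exact: H.
Qed.
End G.

Lemma seq_ext (s1 s2 : seq nat) :
  (forall p, (if p < size s1 then Some (nth 0 s1 p) else None) =
             (if p < size s2 then Some (nth 0 s2 p) else None)) -> s1 = s2.
Proof.
move=> H.
have es : size s1 = size s2.
  apply/eqP; rewrite eqn_leq; apply/andP; split.
    case: (ltnP (size s2) (size s1)) => // h; have := H (size s2); rewrite h ltnn //.
  case: (ltnP (size s1) (size s2)) => // h; have := H (size s1); rewrite h ltnn //.
apply: (eq_from_nth (x0 := 0) es) => p lt.
by have := H p; rewrite lt -es lt => -[].
Qed.

Lemma row_sorted T i : IncP (get T) -> sorted ltn (row T i).
Proof.
move=> ic; apply/(sortedP 0) => p lt.
have := get_row T i p; have -> : p < size (row T i) by lia.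
move=> /ic [h _]; move: h; rewrite -addnS get_row lt //.
Qed.

Lemma rowR k T TR i : valid T -> valid TR ->
  (forall a b, get TR a b = rg k (get T) a b) ->
  row TR i = take (find (fun a => k < a) (row T i)) (row T i).
Proof.
move=> vT vTR rel.
have [_ _ ic] := proj1 (validP T) vT.
have so := row_sorted i ic.
set r := row T i; set n := find _ r.
have nr : n <= size r by apply: find_size.
apply: seq_ext => p.
have := get_row TR i p => <-.
rewrite rel /rg get_row -/r size_take.
have -> : (if n < size r then n else size r) = n by case: ifP => //; lia.
case: (ltnP p n) => pn.
  have -> : p < size r by lia.
  rewrite nth_take //.
  by have := before_find 0 pn; rewrite -/n => /negbT; rewrite -leqNgt => ->.
case: ifP => // ps.
have hs : has (fun a => k < a) r by rewrite has_find; lia.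
have := nth_find 0 hs; rewrite -/n => hn.
have : nth 0 r n <= nth 0 r p.
  case: (ltngtP n p) pn => // np _.
    have H := (@sorted_ltn_nth _ _ ltn_trans 0 r so n p).
    rewrite !inE in H; apply: ltnW; apply: H; lia.
  by rewrite np.
move=> h; by have -> : (nth 0 r p <= k) = false by lia.
Qed.

Definition colT (T : tableau) j :=
  pmap (fun i => omap (fun v => (i, v)) (get T i j)) (iota 0 (size T)).

Lemma none_up (g : nat -> option nat) a b :
  (forall a, g a.+1 <> None -> g a <> None) -> g a = None -> a <= b -> g b = None.
Proof.
move=> dc ga; elim: b => [|b IH] ab.
  by move: ga; have -> : a = 0 by lia.
case: (ltngtP a b.+1) ab => // [lt|<-] _; last by [].
case E: (g b.+1) => [v|] //; exfalso; apply: (dc b); first by rewrite E.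
apply: IH; lia.
Qed.

Lemma pmap_spec (g : nat -> option nat) n :
  (forall a, g a.+1 <> None -> g a <> None) ->
  exists h, [/\ h <= n,
    pmap (fun a => omap (fun v => (a, v)) (g a)) (iota 0 n) = [seq (a, odflt 0 (g a)) | a <- iota 0 h],
    (forall a, a < h -> g a <> None) & (h < n -> g h = None)].
Proof.
move=> dc; elim: n => [|n [h [hn e all hl]]].
  by exists 0; split.
rewrite -addn1 iotaD pmap_cat e /= add0n.
case: (ltngtP h n) hn => // [lt|eq] _.
  have gn : g n = None by apply: (none_up dc (hl lt)); lia.
  exists h; rewrite gn /= cats0; split => //; [lia|move=> _; exact: hl].
subst h.
case E: (g n) => [v|] /=.
  exists n.+1; split => //.
  - by rewrite addn1.
  - by rewrite -addn1 iotaD map_cat /= E.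
  - move=> a alt; case: (ltnP a n) => lt; first exact: all.
    have -> : a = n by lia.
    by rewrite E.
  - lia.
exists n; rewrite cats0; split => //; lia.
Qed.

Lemma col_facts T j : valid T ->
  let c := colT T j in
  [/\ (forall a, a < size c -> (nth (0,0) c a).1 = a /\ get T a j = Some (nth (0,0) c a).2),
      (forall a, size c <= a -> get T a j = None)
    & sorted (fun p q : nat * nat => p.2 < q.2) c].
Proof.
move=> /validP [ne co ic] c.
have dc : forall a, get T a.+1 j <> None -> get T a j <> None by move=> a; apply: co.
have [h [hn e all hl]] := pmap_spec (size T) dc.
have ec : c = [seq (a, odflt 0 (get T a j)) | a <- iota 0 h] by rewrite /c /colT e.
have sc : size c = h by rewrite ec size_map size_iota.
have gh : get T h j = None.
  case: (ltngtP h (size T)) hn => // [lt|->] _; [exact: hl|exact: get_big].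
split.
- move=> a; rewrite sc => ah; rewrite ec (nth_map 0) ?size_iota // nth_iota //=.
  split => //; case E: (get T a j) (all a ah) => [v|] //.
- move=> a; rewrite sc => ha; exact: (none_up dc gh).
- apply/(sortedP (0,0)) => p; rewrite sc => ph.
  rewrite ec !(nth_map 0) ?size_iota //; try lia.
  rewrite !nth_iota //=; try lia.
  case E: (get T p j) (all p (ltnW ph)) => [u|] // _.
  have [_ ] := ic _ _ _ E.
  case E2: (get T p.+1 j) (all p.+1 ph) => [w|] //.
Qed.

Lemma col_m T j : valid T ->
  (if colT T j is [::] then 0 else (last (0, 0) (colT T j)).1.+1) = size (colT T j).
Proof.
move=> vT; have [cn _ _] := col_facts j vT.
move: cn; case E: (colT T j) => [|p c] // cn.
rewrite -nth_last; have [-> _] := cn (size (p :: c)).-1 ltac:(by []).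
by [].
Qed.

Lemma colR k T TR j : valid T -> valid TR ->
  (forall a b, get TR a b = rg k (get T) a b) ->
  colT TR j = take (find (fun p : nat * nat => k < p.2) (colT T j)) (colT T j).
Proof.
move=> vT vTR rel.
have [cn cb _] := col_facts j vT.
have [rn rb _] := col_facts j vTR.
set c := colT T j in cn cb *; set cR := colT TR j in rn rb *.
set n := find _ c.
have nc : n <= size c by apply: find_size.
have gR : forall a v, get TR a j = Some v -> get T a j = Some v /\ v <= k.
  move=> a v; rewrite rel /rg; case: (get T a j) => // u; case: ifP => // uk [<-] //.
have e : size cR = n.
  apply/eqP; rewrite eqn_leq; apply/andP; split.
    case: (ltnP n (size cR)) => // lt; exfalso.
    have [_ g1] := rn n lt.
    have [g2 vk] := gR _ _ g1.
    have nc' : n < size c.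
      case: (ltnP n (size c)) => // hh; by rewrite cb in g2.
    have [_ g3] := cn n nc'.
    have hs : has (fun p : nat * nat => k < p.2) c by rewrite has_find.
    have := nth_find (0,0) hs; rewrite -/n.
    move: g3; rewrite g2 => -[<-]; lia.
  case: (ltnP (size cR) n) => // lt; exfalso.
  have [_ g3] := cn (size cR) ltac:(lia).
  have := before_find (0,0) lt; rewrite -/n => /negbT; rewrite -leqNgt => vk.
  have := rb (size cR) (leqnn _); rewrite rel /rg g3 vk //.
apply: (eq_from_nth (x0 := (0,0))).
  by rewrite size_takel // e.
move=> a; rewrite e => an.
rewrite nth_take //.
have [r1 r2] := rn a ltac:(lia).
have [c1 c2] := cn a ltac:(lia).
have [r2' vk] := gR _ _ r2.
move: r1 r2' c1 c2; case: (nth (0,0) cR a) => a1 v1; case: (nth (0,0) c a) => a2 v2 /= -> -> -> -[->] //.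
Qed.

Definition upd_t T i j x := if valid (set_box T i j x) then set_box T i j x else T.

Lemma hstep_rowE f T i x : hstep f.+1 T (InRow i) x =
  if all (fun y => y <= x) (row T i) then upd_t T i (i + size (row T i)) x
  else hstep f (upd_t T i (i + find (fun y => x < y) (row T i)) x)
         (if i + find (fun y => x < y) (row T i) == i then InCol i.+1 else InRow i.+1)
         (nth 0 (row T i) (find (fun y => x < y) (row T i))).
Proof. by []. Qed.

Lemma hstep_colE f T j x : hstep f.+1 T (InCol j) x =
  if all (fun p : nat * nat => p.2 <= x) (colT T j) then
    upd_t T (if colT T j is [::] then 0 else (last (0, 0) (colT T j)).1.+1) j x
  else hstep f (upd_t T (nth (0,0) (colT T j) (find (fun p : nat * nat => x < p.2) (colT T j))).1 j x)
         (InCol j.+1) (nth (0,0) (colT T j) (find (fun p : nat * nat => x < p.2) (colT T j))).2.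
Proof. by []. Qed.

Lemma upd_t_valid T i j x : valid T -> valid (upd_t T i j x).
Proof. by rewrite /upd_t; case: ifP. Qed.

Lemma hstep_valid f T t x : valid T -> valid (hstep f T t x).
Proof.
elim: f T t x => [|f IH] T t x vT //.
case: t => [i|j]; [rewrite hstep_rowE|rewrite hstep_colE]; case: ifP => _;
  by [apply: upd_t_valid | apply: IH; apply: upd_t_valid].
Qed.

Lemma row_bump T i x : ~~ all (fun y => y <= x) (row T i) ->
  let kk := find (fun y => x < y) (row T i) in
  [/\ kk < size (row T i), get T i (i + kk) = Some (nth 0 (row T i) kk) & x < nth 0 (row T i) kk].
Proof.
move=> na kk.
have hs : has (fun y => x < y) (row T i).
  by apply/hasP; move/allPn: na => [a ain h]; exists a => //; lia.
have lt : kk < size (row T i) by rewrite -has_find.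
split => //; first by rewrite get_row lt.
exact: (nth_find 0 hs).
Qed.

Lemma col_bump T j x : valid T -> ~~ all (fun p : nat * nat => p.2 <= x) (colT T j) ->
  let idx := find (fun p : nat * nat => x < p.2) (colT T j) in
  let p := nth (0,0) (colT T j) idx in
  [/\ idx < size (colT T j), p.1 = idx, get T idx j = Some p.2 & x < p.2].
Proof.
move=> vT na idx p.
have hs : has (fun p : nat * nat => x < p.2) (colT T j).
  by apply/hasP; move/allPn: na => [a ain h]; exists a => //; lia.
have lt : idx < size (colT T j) by rewrite -has_find.
have [cn _ _] := col_facts j vT.
have [h1 h2] := cn idx lt.
split => //; exact: (nth_find (0,0) hs).
Qed.

Definition posT (T : tableau) := forall a b v, get T a b = Some v -> 0 < v.

Lemma upd_t_pos T i j x : posT T -> 0 < x -> posT (upd_t T i j x).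
Proof.
rewrite /upd_t => pT x0; case: ifP => // _.
case ap: (applies T i j); last by rewrite set_box_noop ?ap.
move=> a b v; rewrite get_set_box ?ap //; case: ifP => [_ [<-] //|_]; exact: pT.
Qed.

Lemma hstep_pos f T t x : valid T -> posT T -> 0 < x -> posT (hstep f T t x).
Proof.
elim: f T t x => [|f IH] T t x vT pT x0 //.
case: t => [i|j].
  rewrite hstep_rowE; case: ifP => na; first exact: upd_t_pos.
  have [_ g _] := row_bump (negbT na).
  apply: IH; [exact: upd_t_valid|exact: upd_t_pos|exact: (pT _ _ _ g)].
rewrite hstep_colE; case: ifP => na; first exact: upd_t_pos.
have [_ _ g _] := col_bump vT (negbT na).
apply: IH; [exact: upd_t_valid|exact: upd_t_pos|exact: (pT _ _ _ g)].
Qed.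

Lemma upd_t_big k T i j x : k < x ->
  (get T i j = None \/ exists w, get T i j = Some w /\ k < w) ->
  forall a b, rg k (get (upd_t T i j x)) a b = rg k (get T) a b.
Proof.
move=> kx h a b; rewrite /upd_t; case: ifP => // _.
case ap: (applies T i j); last by rewrite set_box_noop ?ap.
rewrite /rg get_set_box ?ap //.
case: ifP => // /andP [/eqP -> /eqP ->].
have -> : (x <= k) = false by lia.
case: h => [->|[w [-> kw]]] //.
by have -> : (w <= k) = false by lia.
Qed.

Lemma lemmaA k f T t x : valid T -> k < x ->
  forall a b, rg k (get (hstep f T t x)) a b = rg k (get T) a b.
Proof.
elim: f T t x => [|f IH] T t x vT kx a b //.
case: t => [i|j].
  rewrite hstep_rowE; case: ifP => na.
    apply: upd_t_big => //; left; rewrite get_row ltnn //.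
  have [_ g xl] := row_bump (negbT na).
  rewrite IH ?upd_t_valid //; last lia.
  apply: upd_t_big => //; right; eexists; split; [exact: g| lia].
rewrite hstep_colE; case: ifP => na.
  apply: upd_t_big => //; left.
  have [_ cb _] := col_facts j vT.
  rewrite col_m //; exact: cb.
have [_ e1 g xl] := col_bump vT (negbT na).
rewrite IH ?upd_t_valid //; last lia.
apply: upd_t_big => //; right; eexists; split; [rewrite e1; exact: g| lia].
Qed.

Definition need (T : tableau) t :=
  match t with InRow i => size T - i + size (row T 0) + 2 | InCol j => size (row T 0) - j + 1 end.

Lemma upd_t_shape T a b v : get T a b <> None ->
  size (upd_t T a b v) = size T /\ size (row (upd_t T a b v) 0) = size (row T 0).
Proof.
move=> h; rewrite /upd_t; case: ifP => // _.
have aT : a < size T by case: (ltnP a (size T)) => // hh; rewrite get_big in h.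
have [ab lt] := get_neq h.
rewrite size_set_box; have -> : (a == size T) = false by lia.
split => //.
rewrite /set_box aT ab andTb; have -> : b - a <= size (row T a) by lia.
case: (eqVneq a 0) => [e|ne].
  subst a; rewrite {1}/row nth_set_nth /= size_set_nth.
  apply/maxn_idPr; move: lt; rewrite subn0 /row /=; by [].
by rewrite {1}/row nth_set_nth /= eq_sym (negbTE ne).
Qed.

Lemma row_ne T i : 0 < size (row T i) -> i < size T.
Proof. rewrite /row; case: (ltnP i (size T)) => // h; by rewrite nth_default. Qed.

Lemma col_ne T j : valid T -> 0 < size (colT T j) -> j < size (row T 0).
Proof.
move=> vT h; have [cn _ _] := col_facts j vT.
have [_ g] := cn 0 h.
have [_ lt] : 0 <= j /\ j - 0 < size (row T 0) by apply: get_neq; rewrite g.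
lia.
Qed.

Lemma lemmaB k fR : forall f T TR t x, valid T -> valid TR ->
  (forall a b, get TR a b = rg k (get T) a b) -> x <= k ->
  need TR t <= fR -> need T t <= f ->
  forall a b, get (hstep fR TR t x) a b = rg k (get (hstep f T t x)) a b.
Proof.
elim: fR => [|fR IH] f T TR t x vT vTR rel xk nR nT.
  by case: t nR nT => [i|j] /=; lia.
case: f nT => [|f] nT; first by case: t nR nT => [i|j] /=; lia.
case: t nR nT => [i|j] nR nT.
- rewrite !hstep_rowE (rowR i vT vTR rel).
  set r := row T i; set n := find _ r.
  case A: (all (fun y => y <= x) r).
    have e : take n r = r := G1 (key := id) xk A.
    rewrite e A; apply: step_transfer => //.
    by rewrite /r get_row ltnn.
  have [lt g xl] := row_bump (negbT A).
  rewrite -/r in lt g xl.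
  case B: (all (fun y => y <= x) (take n r)).
    have [e1 e2] : find (fun y => x < y) r = size (take n r) /\ k < nth 0 r (size (take n r))
      := G2 (key := id) xk 0 (negbT A) B.
    rewrite e1 in lt g xl *.
    move=> a b; rewrite lemmaA ?upd_t_valid //.
    apply: step_transfer => //; by rewrite g.
  have [e1 e2 _] : [/\ find (fun y => x < y) (take n r) = find (fun y => x < y) r,
      nth 0 (take n r) (find (fun y => x < y) (take n r)) = nth 0 r (find (fun y => x < y) r)
      & ~~ all (fun y => y <= x) r] := G3 (key := id) xk 0 (negbT B).
  rewrite e2 e1.
  set kk := find _ r in lt g xl e1 e2 *.
  have hR : has (fun y => x < y) (take n r).
    by apply/hasP; move/allPn: (negbT B) => [a ain h]; exists a => //; lia.
  have kR : kk < size (take n r) by rewrite -e1 -has_find.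
  have kn : kk < n by move: kR; rewrite size_take; case: ifP => //; lia.
  have gR : get TR i (i + kk) <> None by rewrite get_row (rowR i vT vTR rel) kR.
  have iR : i < size TR by apply: row_ne; rewrite (rowR i vT vTR rel) -/r -/n; lia.
  have iT : i < size T by apply: row_ne; rewrite -/r; lia.
  have [sT sT0] := upd_t_shape x (a := i) (b := i + kk) (T := T) ltac:(by rewrite g).
  have [sR sR0] := upd_t_shape x gR.
  apply: IH.
  + exact: upd_t_valid.
  + exact: upd_t_valid.
  + apply: step_transfer => //; by rewrite g.
  + have := before_find 0 kn; rewrite -/n => /negbT; lia.
  + case: ifP => _ /=; rewrite ?sR ?sR0 /=; move: nR => /=; lia.
  + case: ifP => _ /=; rewrite ?sT ?sT0 /=; move: nT => /=; lia.
- rewrite !hstep_colE (col_m j vTR) (col_m j vT) (colR j vT vTR rel).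
  have [cn cb _] := col_facts j vT.
  set c := colT T j in cn cb *; set n := find _ c.
  case A: (all (fun p : nat * nat => p.2 <= x) c).
    have e : take n c = c := G1 (key := snd) xk A.
    rewrite e A; apply: step_transfer => //.
    by rewrite cb.
  have [lt e0 g xl] := col_bump vT (negbT A).
  rewrite -/c in lt e0 g xl; rewrite e0.
  case B: (all (fun p : nat * nat => p.2 <= x) (take n c)).
    have [e1 e2] : find (fun p : nat * nat => x < p.2) c = size (take n c) /\
        k < (nth (0,0) c (size (take n c))).2 := G2 (key := snd) xk (0,0) (negbT A) B.
    rewrite e1 in lt g xl e0 *.
    move=> a b; rewrite lemmaA ?upd_t_valid //.
    apply: step_transfer => //; by rewrite g.
  have [e1 e2 _] : [/\ find (fun p : nat * nat => x < p.2) (take n c) = find (fun p : nat * nat => x < p.2) c,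
      nth (0,0) (take n c) (find (fun p : nat * nat => x < p.2) (take n c)) =
        nth (0,0) c (find (fun p : nat * nat => x < p.2) c)
      & ~~ all (fun p : nat * nat => p.2 <= x) c] := G3 (key := snd) xk (0,0) (negbT B).
  rewrite e2 e0.
  set kk := find _ c in lt g xl e1 e2 e0 *.
  have hR : has (fun p : nat * nat => x < p.2) (take n c).
    by apply/hasP; move/allPn: (negbT B) => [a ain h]; exists a => //; lia.
  have kR : kk < size (take n c) by rewrite -e1 -has_find.
  have kn : kk < n by move: kR; rewrite size_take; case: ifP => //; lia.
  have jT : j < size (row T 0) by apply: (col_ne vT); rewrite -/c; lia.
  have jR : j < size (row TR 0).
    apply: (col_ne vTR); rewrite (colR j vT vTR rel) -/c -/n.
    lia.
  have gR : get TR kk j <> None by rewrite rel /rg g; have := before_find (0,0) kn; rewrite -/n => /negbT; rewrite -leqNgt => ->.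
  have [sT sT0] := upd_t_shape x (a := kk) (b := j) (T := T) ltac:(by rewrite g).
  have [sR sR0] := upd_t_shape x gR.
  apply: IH.
  + exact: upd_t_valid.
  + exact: upd_t_valid.
  + apply: step_transfer => //; by rewrite g.
  + have := before_find (0,0) kn; rewrite -/n => /negbT; lia.
  + rewrite /need sR0; move: nR; rewrite /need; lia.
  + rewrite /need sT0; move: nT; rewrite /need; lia.
Qed.

Lemma size_le_sumn (T : tableau) : NE T -> size T <= sumn (map size T).
Proof.
elim: T => [|r T IH] //= ne.
have := ne 0 (ltn0Sn _); rewrite /row /= => h.
have : size T <= sumn (map size T).
  apply: IH => a aT; exact: (ne a.+1).
lia.
Qed.

Lemma need_ok T : valid T -> need T (InRow 0) <= 2 * sumn (map size T) + 5.
Proof.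
move=> /validP [ne _ _]; rewrite /need.
have := size_le_sumn ne.
have : size (row T 0) <= sumn (map size T) by case: T {ne} => [|r T] //=; rewrite /row /=; lia.
lia.
Qed.

Lemma ins_valid T x : valid T -> valid (hecke_insert T x).
Proof. exact: hstep_valid. Qed.

Lemma fold_inv w T : valid T -> posT T -> all (fun a => 0 < a) w ->
  valid (foldl hecke_insert T w) /\ posT (foldl hecke_insert T w).
Proof.
elim: w T => [|a w IH] T vT pT //= /andP [a0 aw].
apply: IH => //; first exact: ins_valid.
exact: hstep_pos.
Qed.

Lemma main k w : forall T TR, valid T -> valid TR -> posT T -> all (fun a => 0 < a) w ->
  (forall a b, get TR a b = rg k (get T) a b) ->
  forall a b, get (foldl hecke_insert TR (restrict_word w k)) a b =
              rg k (get (foldl hecke_insert T w)) a b.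
Proof.
elim: w => [|c w IH] T TR vT vTR pT /= pw rel //.
move: pw => /andP [c0 pw].
rewrite /restrict_word /=; case: ifP => ck.
  rewrite /=; apply: IH => //.
  - exact: ins_valid.
  - exact: ins_valid.
  - exact: hstep_pos.
  - move=> a b; apply: lemmaB => //; exact: need_ok.
apply: IH => //.
- exact: ins_valid.
- exact: hstep_pos.
- move=> a b; rewrite rel lemmaA //; lia.
Qed.

Unset Implicit Arguments.
Theorem lemma2 (w : seq nat) (k : nat) :
  all (fun a => 0 < a) w -> 1 <= k ->
  forall i j : nat, get (P (restrict_word w k)) i j = restrict_get (P w) k i j.
Proof.
move=> pw _ i j.
have v0 : valid [::] by [].
have p0 : posT [::] by move=> a b v; rewrite get_big.
have [_ pP] := fold_inv v0 p0 pw.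
rewrite /P (main (k := k) v0 v0 p0 pw) /rg /restrict_get; last first.
  by move=> a b; rewrite /rg !get_big.
case E: (get (foldl hecke_insert [::] w) i j) => [v|] //.
by rewrite (pP _ _ _ E).
Qed.
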